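(* Let $\Gamma$ be a finitely generated group that contains an infinite acentral subgroup $A$ of infinite index in $\Gamma$. Then $\Gamma$ is not presentable by a product.
   Context: A subgroup $A$ of a group $\Gamma$ is called acentral if for every $g\in A\setminus\{1\}$ the centraliser $C_\Gamma(g)$ is contained in $A$. An infinite group $\Gamma$ is not presentable by a product if for every homomorphism $\varphi\colon \Gamma_1\times\Gamma_2\to\Gamma$ whose image has finite index in $\Gamma$, at least one of the images $\varphi(\Gamma_1)$, $\varphi(\Gamma_2)$ is finite; an infinite group is presentable by a product if it is not ''not presentable by a product''. *)

(* Defs.v *)
From Stdlib Require Import List.
Import ListNotations.

Record Group : Type := MkGroup {
  carrier :> Type;
  gmul : carrier -> carrier -> carrier;
  gone : carrier;
  ginv : carrier -> carrier;
  gmulA : forall x y z, gmul x (gmul y z) = gmul (gmul x y) z;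
  gmul1l : forall x, gmul gone x = x;
  gmul1r : forall x, gmul x gone = x;
  gmulVl : forall x, gmul (ginv x) x = gone;
  gmulVr : forall x, gmul x (ginv x) = gone
}.

Arguments gmul {g} _ _.
Arguments gone {g}.
Arguments ginv {g} _.

Definition prod_group (G1 G2 : Group) : Group.
Proof.
refine (@MkGroup (G1 * G2)%type
  (fun x y => (gmul (fst x) (fst y), gmul (snd x) (snd y)))
  (gone, gone)
  (fun x => (ginv (fst x), ginv (snd x))) _ _ _ _ _).
- intros [a b] [c d] [e f]; simpl; now rewrite !gmulA.
- intros [a b]; simpl; now rewrite !gmul1l.
- intros [a b]; simpl; now rewrite !gmul1r.
- intros [a b]; simpl; now rewrite !gmulVl.
- intros [a b]; simpl; now rewrite !gmulVr.
Defined.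

Definition is_hom {G H : Group} (f : G -> H) : Prop :=
  forall x y : G, f (gmul x y) = gmul (f x) (f y).

Definition is_subgroup {G : Group} (A : G -> Prop) : Prop :=
  A gone /\ (forall x y, A x -> A y -> A (gmul x y)) /\ (forall x, A x -> A (ginv x)).

Definition finite_set {G : Type} (A : G -> Prop) : Prop :=
  exists l : list G, forall x, A x -> In x l.

Definition infinite_set {G : Type} (A : G -> Prop) : Prop := ~ finite_set A.

Definition infinite_group (G : Group) : Prop := infinite_set (fun _ : G => True).

Definition generated {G : Group} (S : G -> Prop) : G -> Prop :=
  fun g => forall B : G -> Prop, is_subgroup B -> (forall s, S s -> B s) -> B g.

Definition finitely_generated (G : Group) : Prop :=
  exists l : list G, forall g : G, generated (fun s => In s l) g.

Definition finite_index {G : Group} (A : G -> Prop) : Prop :=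
  exists l : list G, forall g : G, exists x, In x l /\ exists a, A a /\ g = gmul x a.

Definition infinite_index {G : Group} (A : G -> Prop) : Prop := ~ finite_index A.

Definition centraliser {G : Group} (g : G) : G -> Prop :=
  fun h => gmul h g = gmul g h.

Definition acentral {G : Group} (A : G -> Prop) : Prop :=
  forall g, A g -> g <> gone -> forall h, centraliser g h -> A h.

Definition image {X Y : Type} (f : X -> Y) : Y -> Prop :=
  fun y => exists x, f x = y.

Definition not_presentable_by_product (G : Group) : Prop :=
  infinite_group G /\
  forall (G1 G2 : Group) (phi : prod_group G1 G2 -> G),
    is_hom phi ->
    finite_index (image phi) ->
    finite_set (image (fun g1 : G1 => phi (g1, (gone : G2)))) \/
    finite_set (image (fun g2 : G2 => phi ((gone : G1), g2))).

(* Main.v *)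
Require Import Defs.
From Stdlib Require Import List Classical.
Import ListNotations.

Section GL.
Context {G : Group}.

Lemma mulKl (r c : G) : gmul (ginv r) (gmul r c) = c.
Proof. rewrite gmulA, gmulVl, gmul1l. reflexivity. Qed.

Lemma inv_uniq (u v : G) : gmul u v = gone -> u = ginv v.
Proof.
intro H. rewrite <- (gmul1r _ u), <- (gmulVr _ v), gmulA, H, gmul1l. reflexivity.
Qed.

Lemma idem_one (x : G) : gmul x x = x -> x = gone.
Proof.
intro H. rewrite <- (mulKl x x), H, gmulVl. reflexivity.
Qed.
End GL.

Lemma hom_one {G H : Group} (f : G -> H) : is_hom f -> f gone = gone.
Proof. intro Hf. apply idem_one. rewrite <- Hf, gmul1l. reflexivity. Qed.

Lemma hom_inv {G H : Group} (f : G -> H) : is_hom f -> forall x, f (ginv x) = ginv (f x).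
Proof. intros Hf x. apply inv_uniq. rewrite <- Hf, gmulVl. apply hom_one; auto. Qed.

Lemma phi_split (G1 G2 G : Group) (phi : prod_group G1 G2 -> G) :
  is_hom phi -> forall x y,
  phi (x, y) = gmul (phi (x, gone)) (phi (gone, y)) /\
  phi (x, y) = gmul (phi (gone, y)) (phi (x, gone)).
Proof.
intros Hf x y. split.
- rewrite <- Hf. simpl. rewrite gmul1r, gmul1l. reflexivity.
- rewrite <- Hf. simpl. rewrite gmul1r, gmul1l. reflexivity.
Qed.

Lemma nontriv_of_infinite {G : Group} (S : G -> Prop) :
  infinite_set S -> exists s, S s /\ s <> gone.
Proof.
intro Hi. apply NNPP. intro Hn. apply Hi. exists [gone]. intros x Hx.
left. apply NNPP. intro Hne. apply Hn. exists x. split; auto.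
Qed.

Theorem proposition3p2 (G : Group) (A : G -> Prop) :
  finitely_generated G ->
  is_subgroup A ->
  infinite_set A ->
  acentral A ->
  infinite_index A ->
  not_presentable_by_product G.
Proof.
intros _ [HA1 [HAm HAi]] Hinf Hac Hidx. split.
{ intros [l Hl]. apply Hinf. exists l. intros x _. apply Hl. auto. }
intros G1 G2 phi Hf [L HL].
assert (HAI : infinite_set (fun a => A a /\ image phi a)).
{ intros [l Hl]. apply Hinf.
  assert (HR : exists R : list G, forall x, In x L ->
     (exists a, A a /\ exists m, image phi m /\ a = gmul x m) ->
     exists r, In r R /\ A r /\ exists m', image phi m' /\ r = gmul x m').
  { clear HL. induction L as [|x0 L IH].
    - exists []. intros x [].
    - destruct IH as [R HR].
      destruct (classic (exists a, A a /\ exists m, image phi m /\ a = gmul x0 m)) as [[a [Ha Hm]]|Hn].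
      + exists (a :: R). intros x [<-|Hx] He.
        * exists a. split; [left; auto|]. auto.
        * destruct (HR x Hx He) as [r [? ?]]. exists r. split; [right|]; auto.
      + exists R. intros x [<-|Hx] He.
        * contradiction.
        * auto. }
  destruct HR as [R HR].
  exists (flat_map (fun r => map (fun c => gmul r c) l) R).
  intros a Ha. destruct (HL a) as [x [Hx [m [Hm Ham]]]].
  destruct (HR x Hx (ex_intro _ a (conj Ha (ex_intro _ m (conj Hm Ham)))))
    as [r [Hr [HrA [m' [Hm' Hrm]]]]].
  set (c := gmul (ginv m') m).
  assert (Hac' : a = gmul r c).
  { unfold c. rewrite Hrm, Ham, <- gmulA, (gmulA _ m'), gmulVr, gmul1l. reflexivity. }
  assert (HcA : A c).
  { replace c with (gmul (ginv r) a) by (rewrite Hac'; apply mulKl). auto. }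
  assert (HcI : image phi c).
  { destruct Hm as [p Hp]. destruct Hm' as [p' Hp']. exists (gmul (ginv p') p).
    unfold c. rewrite Hf, hom_inv, Hp, Hp'; auto. }
  apply in_flat_map. exists r. split; auto. apply in_map_iff. exists c. split; [symmetry; exact Hac'|].
  apply Hl. auto. }
destruct (nontriv_of_infinite _ HAI) as [a [[Ha [[g1 g2] Hp]] Hne]].
destruct (classic (finite_set (image (fun g1 : G1 => phi (g1, (gone : G2)))))) as [F1|I1]; [left; auto|].
destruct (classic (finite_set (image (fun g2 : G2 => phi ((gone : G1), g2))))) as [F2|I2]; [right; auto|].
exfalso.
assert (K1 : forall x, A (phi (x, gone)) -> phi (x, gone) <> gone -> forall y, A (phi (gone, y))).
{ intros x Hx Hn y. apply (Hac _ Hx Hn). unfold centraliser.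
  destruct (phi_split _ _ _ phi Hf x y) as [E1 E2]. rewrite <- E1, <- E2. reflexivity. }
assert (K2 : forall y, A (phi (gone, y)) -> phi (gone, y) <> gone -> forall x, A (phi (x, gone))).
{ intros y Hy Hn x. apply (Hac _ Hy Hn). unfold centraliser.
  destruct (phi_split _ _ _ phi Hf x y) as [E1 E2]. rewrite <- E1, <- E2. reflexivity. }
assert (Hall : (forall x, A (phi (x, gone))) /\ (forall y, A (phi (gone, y)))).
{ destruct (phi_split _ _ _ phi Hf g1 g2) as [E1 E2].
  set (h1 := phi (g1, gone)) in *. set (h2 := phi (gone, g2)) in *.
  assert (Hh1 : A h1).
  { apply (Hac a Ha Hne). unfold centraliser. rewrite <- Hp, E1.
    rewrite <- gmulA. f_equal. rewrite <- E1, <- E2. reflexivity. }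
  assert (Hh2 : A h2).
  { apply (Hac a Ha Hne). unfold centraliser. rewrite <- Hp, E2.
    rewrite <- gmulA. f_equal. rewrite <- E1, <- E2. reflexivity. }
  destruct (classic (h1 = gone)) as [Z1|N1].
  - assert (N2 : h2 <> gone).
    { intro Z2. apply Hne. rewrite <- Hp, E1, Z1, Z2, gmul1l. reflexivity. }
    pose proof (K2 g2 Hh2 N2) as HX.
    destruct (nontriv_of_infinite _ I1) as [b [[x Hx] Hb]]. subst b.
    split; auto. apply (K1 x); auto.
  - pose proof (K1 g1 Hh1 N1) as HY.
    destruct (nontriv_of_infinite _ I2) as [b [[y Hy] Hb]]. subst b.
    split; auto. apply (K2 y); auto. }
destruct Hall as [HX HY].
apply Hidx. exists L. intros g. destruct (HL g) as [x [Hx [m [[[p1 p2] Hm] Hg]]]].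
exists x. split; auto. exists m. split; auto. subst m.
destruct (phi_split _ _ _ phi Hf p1 p2) as [E1 _]. rewrite E1. auto.
Qed.
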